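(* Let $D$ be a weak bialgebra with a weak projection $(D,B,f,g)$ onto the weak Hopf algebra $B$ with antipode $\lambda_B$, and let $\phi_D=\mu_D\circ(D\otimes f)$. Then the morphism $t_B^D=\phi_D\circ(D\otimes(\lambda_B\circ g))\circ\delta_D:D\rightarrow D$ is idempotent, and if $p_B^D:D\rightarrow D^B$, $i_B^D:D^B\rightarrow D$ is a splitting of $t_B^D$ (i.e. $t_B^D=i_B^D\circ p_B^D$, $p_B^D\circ i_B^D=id_{D^B}$), then $p_B^D$ is a coequalizer of the pair of morphisms $\phi_D,\beta_D:D\otimes B\rightarrow D$, where $\beta_D=(D\otimes(\varepsilon_D\circ\phi_D))\circ(\delta_D\otimes B)$.
   Context: $\mathcal C$ is a strict braided monoidal category with tensor product $\otimes$, unit object $K$ and braiding $c$, in which every idempotent splits. Algebras have unit $\eta$ and product $\mu$; coalgebras counit $\varepsilon$ and coproduct $\delta$; $f\wedge g=\mu\circ(f\otimes g)\circ\delta$. A weak bialgebra is an algebra and coalgebra $D$ with $\delta_D\circ\mu_D=(\mu_D\otimes\mu_D)\circ(D\otimes c_{D,D}\otimes D)\circ(\delta_D\otimes\delta_D)$; $\varepsilon_D\circ\mu_D\circ(\mu_D\otimes D)=((\varepsilon_D\circ\mu_D)\otimes(\varepsilon_D\circ\mu_D))\circ(D\otimes\delta_D\otimes D)=((\varepsilon_D\circ\mu_D)\otimes(\varepsilon_D\circ\mu_D))\circ(D\otimes(c_{D,D}^{-1}\circ\delta_D)\otimes D)$; $(\delta_D\otimes D)\circ\delta_D\circ\eta_D=(D\otimes\mu_D\otimes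 D)\circ((\delta_D\circ\eta_D)\otimes(\delta_D\circ\eta_D))=(D\otimes(\mu_D\circ c_{D,D}^{-1})\otimes D)\circ((\delta_D\circ\eta_D)\otimes(\delta_D\circ\eta_D))$. It is a weak Hopf algebra if there is $\lambda_D:D\rightarrow D$ (antipode) with $id_D\wedge\lambda_D=\Pi_D^L$, $\lambda_D\wedge id_D=\Pi_D^R$, $\lambda_D\wedge id_D\wedge\lambda_D=\lambda_D$, where $\Pi_D^L=((\varepsilon_D\circ\mu_D)\otimes D)\circ(D\otimes c_{D,D})\circ((\delta_D\circ\eta_D)\otimes D)$ and $\Pi_D^R=(D\otimes(\varepsilon_D\circ\mu_D))\circ(c_{D,D}\otimes D)\circ(D\otimes(\delta_D\circ\eta_D))$. A morphism of weak bialgebras is a morphism that is both an algebra and a coalgebra morphism. Weak projection: $D$ a weak bialgebra, $B$ a weak Hopf algebra, $f:B\rightarrow D$ a morphism of weak bialgebras and $g:D\rightarrow B$ a coalgebra morphism with $g\circ f=id_B$ and $g\circ\mu_D\circ(D\otimes f)=\mu_B\circ(g\otimes B)$; this is denoted $(D,B,f,g)$. *)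

(* Defs.v *)
(* A strict braided monoidal category in which every idempotent splits,
   presented in single-sorted ("arrows only") form: one type of morphisms
   [Mor] with domain/codomain maps; composition and tensor product are total
   operations whose laws are only required on composable/typed arguments. *)

Record SBMC := {
  Ob : Type;
  Mor : Type;
  dom : Mor -> Ob;
  cod : Mor -> Ob;
  idm : Ob -> Mor;
  comp : Mor -> Mor -> Mor;           (* comp g f = g o f *)
  ten : Ob -> Ob -> Ob;
  tenm : Mor -> Mor -> Mor;
  unitO : Ob;
  braid : Ob -> Ob -> Mor;
  braidinv : Ob -> Ob -> Mor;

  dom_idm : forall A, dom (idm A) = A;
  cod_idm : forall A, cod (idm A) = A;
  dom_comp : forall f g, cod f = dom g -> dom (comp g f) = dom f;
  cod_comp : forall f g, cod f = dom g -> cod (comp g f) = cod g;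
  comp_idl : forall f, comp (idm (cod f)) f = f;
  comp_idr : forall f, comp f (idm (dom f)) = f;
  comp_assoc : forall f g h, cod f = dom g -> cod g = dom h ->
      comp h (comp g f) = comp (comp h g) f;

  dom_tenm : forall f g, dom (tenm f g) = ten (dom f) (dom g);
  cod_tenm : forall f g, cod (tenm f g) = ten (cod f) (cod g);
  tenm_idm : forall A B, tenm (idm A) (idm B) = idm (ten A B);
  tenm_comp : forall f g f' g', cod f = dom g -> cod f' = dom g' ->
      tenm (comp g f) (comp g' f') = comp (tenm g g') (tenm f f');

  ten_assoc : forall A B C, ten (ten A B) C = ten A (ten B C);
  ten_unitl : forall A, ten unitO A = A;
  ten_unitr : forall A, ten A unitO = A;
  tenm_assoc : forall f g h, tenm (tenm f g) h = tenm f (tenm g h);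
  tenm_unitl : forall f, tenm (idm unitO) f = f;
  tenm_unitr : forall f, tenm f (idm unitO) = f;

  dom_braid : forall A B, dom (braid A B) = ten A B;
  cod_braid : forall A B, cod (braid A B) = ten B A;
  dom_braidinv : forall A B, dom (braidinv A B) = ten B A;
  cod_braidinv : forall A B, cod (braidinv A B) = ten A B;
  braidinv_braid : forall A B, comp (braidinv A B) (braid A B) = idm (ten A B);
  braid_braidinv : forall A B, comp (braid A B) (braidinv A B) = idm (ten B A);
  braid_natural : forall f g,
      comp (braid (cod f) (cod g)) (tenm f g)
      = comp (tenm g f) (braid (dom f) (dom g));
  braid_hex1 : forall A B C,
      braid A (ten B C)
      = comp (tenm (idm B) (braid A C)) (tenm (braid A B) (idm C));
  braid_hex2 : forall A B C,
      braid (ten A B) C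
      = comp (tenm (braid A C) (idm B)) (tenm (idm A) (braid B C));

  idem_split : forall e, dom e = cod e -> comp e e = e ->
      exists (A : Ob) (p i : Mor),
        dom p = dom e /\ cod p = A /\ dom i = A /\ cod i = dom e /\
        comp i p = e /\ comp p i = idm A
}.

Arguments dom {s}. Arguments cod {s}. Arguments idm {s}. Arguments comp {s}.
Arguments ten {s}. Arguments tenm {s}. Arguments unitO {s}.
Arguments braid {s}. Arguments braidinv {s}.

Section Algebra.
Variable C : SBMC.

Definition hom (f : Mor C) (A B : Ob C) : Prop := dom f = A /\ cod f = B.

Definition is_algebra (A : Ob C) (eta mu : Mor C) : Prop :=
  hom eta unitO A /\ hom mu (ten A A) A /\
  comp mu (tenm mu (idm A)) = comp mu (tenm (idm A) mu) /\
  comp mu (tenm eta (idm A)) = idm A /\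
  comp mu (tenm (idm A) eta) = idm A.

Definition is_coalgebra (A : Ob C) (eps delta : Mor C) : Prop :=
  hom eps A unitO /\ hom delta A (ten A A) /\
  comp (tenm delta (idm A)) delta = comp (tenm (idm A) delta) delta /\
  comp (tenm eps (idm A)) delta = idm A /\
  comp (tenm (idm A) eps) delta = idm A.

Definition wedge (mu delta f g : Mor C) : Mor C :=
  comp mu (comp (tenm f g) delta).

Definition is_weak_bialgebra (D : Ob C) (eta mu eps delta : Mor C) : Prop :=
  is_algebra D eta mu /\ is_coalgebra D eps delta /\
  comp delta mu
    = comp (tenm mu mu)
        (comp (tenm (idm D) (tenm (braid D D) (idm D))) (tenm delta delta)) /\
  comp eps (comp mu (tenm mu (idm D)))
    = comp (tenm (comp eps mu) (comp eps mu))
        (tenm (idm D) (tenm delta (idm D))) /\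
  comp eps (comp mu (tenm mu (idm D)))
    = comp (tenm (comp eps mu) (comp eps mu))
        (tenm (idm D) (tenm (comp (braidinv D D) delta) (idm D))) /\
  comp (tenm delta (idm D)) (comp delta eta)
    = comp (tenm (idm D) (tenm mu (idm D)))
        (tenm (comp delta eta) (comp delta eta)) /\
  comp (tenm delta (idm D)) (comp delta eta)
    = comp (tenm (idm D) (tenm (comp mu (braidinv D D)) (idm D)))
        (tenm (comp delta eta) (comp delta eta)).

Definition PiL (D : Ob C) (eta mu eps delta : Mor C) : Mor C :=
  comp (tenm (comp eps mu) (idm D))
    (comp (tenm (idm D) (braid D D)) (tenm (comp delta eta) (idm D))).

Definition PiR (D : Ob C) (eta mu eps delta : Mor C) : Mor C :=
  comp (tenm (idm D) (comp eps mu))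
    (comp (tenm (braid D D) (idm D)) (tenm (idm D) (comp delta eta))).

Definition is_antipode (D : Ob C) (eta mu eps delta lam : Mor C) : Prop :=
  hom lam D D /\
  wedge mu delta (idm D) lam = PiL D eta mu eps delta /\
  wedge mu delta lam (idm D) = PiR D eta mu eps delta /\
  wedge mu delta (wedge mu delta lam (idm D)) lam = lam.

Definition is_weak_hopf (D : Ob C) (eta mu eps delta lam : Mor C) : Prop :=
  is_weak_bialgebra D eta mu eps delta /\ is_antipode D eta mu eps delta lam.

Definition is_algebra_morphism (A A' : Ob C) (eta mu eta' mu' f : Mor C) : Prop :=
  hom f A A' /\ comp f eta = eta' /\ comp f mu = comp mu' (tenm f f).

Definition is_coalgebra_morphism (A A' : Ob C) (eps delta eps' delta' f : Mor C)
  : Prop :=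
  hom f A A' /\ comp eps' f = eps /\ comp delta' f = comp (tenm f f) delta.

Definition is_weak_projection (D B : Ob C)
    (etaD muD epsD deltaD : Mor C) (etaB muB epsB deltaB lamB : Mor C)
    (f g : Mor C) : Prop :=
  is_weak_bialgebra D etaD muD epsD deltaD /\
  is_weak_hopf B etaB muB epsB deltaB lamB /\
  is_algebra_morphism B D etaB muB etaD muD f /\
  is_coalgebra_morphism B D epsB deltaB epsD deltaD f /\
  is_coalgebra_morphism D B epsD deltaD epsB deltaB g /\
  comp g f = idm B /\
  comp g (comp muD (tenm (idm D) f)) = comp muB (tenm g (idm B)).

Definition is_coequalizer (a b p : Mor C) : Prop :=
  comp p a = comp p b /\
  forall h : Mor C, dom h = cod a -> comp h a = comp h b ->
    exists u : Mor C, dom u = cod p /\ cod u = cod h /\ comp u p = h /\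
      forall u' : Mor C, dom u' = cod p -> cod u' = cod h -> comp u' p = h ->
        u' = u.

End Algebra.

(* Main.v *)
Require Import Defs.

Definition lay {C : SBMC} (X : Ob C) (a : Mor C) (Y : Ob C) : Mor C :=
  tenm (idm X) (tenm a (idm Y)).

Section Infra_L.
Variable C : SBMC.

Lemma hom_comp (f g : Mor C) A M M' B : hom C f A M -> hom C g M' B -> M = M' -> hom C (comp g f) A B.
Proof. intros [H1 H2] [H3 H4] E; subst. split; [rewrite dom_comp|rewrite cod_comp]; congruence. Qed.
Lemma hom_tenm (f g : Mor C) A1 B1 A2 B2 : hom C f A1 B1 -> hom C g A2 B2 -> hom C (tenm f g) (ten A1 A2) (ten B1 B2).
Proof. intros [H1 H2] [H3 H4]; split; [rewrite dom_tenm|rewrite cod_tenm]; congruence. Qed.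
Lemma hom_idm (A : Ob C) : hom C (idm A) A A.
Proof. split; [apply dom_idm|apply cod_idm]. Qed.
Lemma hom_braid (A B : Ob C) : hom C (braid A B) (ten A B) (ten B A).
Proof. split; [apply dom_braid|apply cod_braid]. Qed.
Lemma hom_braidinv (A B : Ob C) : hom C (braidinv A B) (ten B A) (ten A B).
Proof. split; [apply dom_braidinv|apply cod_braidinv]. Qed.
Lemma hom_conv (f : Mor C) A B A' B' : hom C f A B -> A = A' -> B = B' -> hom C f A' B'.
Proof. intros H E1 E2; subst; exact H. Qed.
Lemma hom_lay (a : Mor C) X P Q Y : hom C a P Q -> hom C (lay X a Y) (ten X (ten P Y)) (ten X (ten Q Y)).
Proof. intros H. unfold lay. apply hom_tenm. apply hom_idm. apply hom_tenm. exact H. apply hom_idm. Qed.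
Lemma cd (f g : Mor C) A M M' B : hom C f A M -> hom C g M' B -> M = M' -> cod f = dom g.
Proof. intros [H1 H2] [H3 H4] E; congruence. Qed.
Lemma codh (f : Mor C) A B : hom C f A B -> cod f = B.
Proof. intros [H1 H2]; exact H2. Qed.
Lemma domh (f : Mor C) A B : hom C f A B -> dom f = A.
Proof. intros [H1 H2]; exact H1. Qed.
End Infra_L.

Ltac oeq := first [ reflexivity
  | (repeat rewrite ?ten_assoc, ?ten_unitl, ?ten_unitr); reflexivity ].

Ltac ty :=
  lazymatch goal with
  | |- hom _ (comp _ _) _ _ => eapply hom_comp; [ty | ty | oeq]
  | |- hom _ (tenm _ _) _ _ => eapply hom_conv; [eapply hom_tenm; [ty|ty] | oeq | oeq]
  | |- hom _ (idm _) _ _ => eapply hom_conv; [apply hom_idm | oeq | oeq]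
  | |- hom _ (braid _ _) _ _ => eapply hom_conv; [apply hom_braid | oeq | oeq]
  | |- hom _ (braidinv _ _) _ _ => eapply hom_conv; [apply hom_braidinv | oeq | oeq]
  | |- hom _ (lay _ _ _) _ _ => eapply hom_conv; [eapply hom_lay; ty | oeq | oeq]
  | |- hom _ _ _ _ => eapply hom_conv; [eassumption | oeq | oeq]
  end.

Ltac tc :=
  lazymatch goal with
  | |- cod ?f = dom ?g => eapply cd; [ty | ty | oeq]
  | |- cod ?f = ?X => eapply codh; ty
  | |- dom ?f = ?X => eapply domh; ty
  | |- hom _ _ _ _ => ty
  | |- _ = _ => oeq
  end.

Section Infra2_L.
Variable C : SBMC.
Implicit Types (f g h a b : Mor C) (X Y M P Q R S A B : Ob C).
Ltac sc := repeat (rewrite cod_idm || rewrite dom_idm || rewrite cod_tenm || rewrite dom_tenm); try congruence.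

Lemma idl f X : cod f = X -> comp (idm X) f = f.
Proof. intros <-. apply comp_idl. Qed.
Lemma idr f X : dom f = X -> comp f (idm X) = f.
Proof. intros <-. apply comp_idr. Qed.
Lemma idid X : comp (idm X) (idm X) = idm X.
Proof. apply idl. apply cod_idm. Qed.

Lemma tsplit1 f g : tenm f g = comp (tenm f (idm (cod g))) (tenm (idm (dom f)) g).
Proof. rewrite <- tenm_comp by (rewrite ?cod_idm, ?dom_idm; reflexivity).
  rewrite comp_idl, comp_idr. reflexivity. Qed.
Lemma tsplit2 f g : tenm f g = comp (tenm (idm (cod f)) g) (tenm f (idm (dom g))).
Proof. rewrite <- tenm_comp by (rewrite ?cod_idm, ?dom_idm; reflexivity).
  rewrite comp_idl, comp_idr. reflexivity. Qed.

Lemma lay_comp X f g Y : cod f = dom g -> lay X (comp g f) Y = comp (lay X g Y) (lay X f Y).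
Proof. intros E. unfold lay. rewrite <- tenm_comp by sc. rewrite <- tenm_comp by sc.
  rewrite !idid. reflexivity. Qed.

Lemma lay_lay X X' a Y' Y : lay X (lay X' a Y') Y = lay (ten X X') a (ten Y' Y).
Proof. unfold lay. rewrite !tenm_assoc, <- !tenm_idm, !tenm_assoc. reflexivity. Qed.

Lemma lay_idm X P Y : lay X (idm P) Y = idm (ten X (ten P Y)).
Proof. unfold lay. rewrite !tenm_idm. reflexivity. Qed.

Lemma lay_tenm X f g Y : lay X (tenm f g) Y =
  comp (lay X f (ten (cod g) Y)) (lay (ten X (dom f)) g Y).
Proof. rewrite (tsplit1 f g). rewrite lay_comp by (rewrite cod_tenm, dom_tenm, cod_idm, dom_idm; reflexivity).
  unfold lay. rewrite <- !tenm_idm, !tenm_assoc. reflexivity. Qed.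

Lemma lay_u a : a = lay unitO a unitO.
Proof. unfold lay. rewrite tenm_unitl, tenm_unitr. reflexivity. Qed.
Lemma comp_wrapl a g : comp a g = comp (lay unitO a unitO) g.
Proof. rewrite <- lay_u. reflexivity. Qed.
Lemma comp_wrapr a g : comp g a = comp g (lay unitO a unitO).
Proof. rewrite <- lay_u. reflexivity. Qed.

Lemma cassoc f g h : cod f = dom g -> cod g = dom h -> comp (comp h g) f = comp h (comp g f).
Proof. intros. symmetry. apply comp_assoc; assumption. Qed.

(* a : P -> Q (later, left), b : R -> S (earlier, right) *)
Lemma swapL a b P Q R S X1 Y1 X2 Y2 M :
  hom C a P Q -> hom C b R S -> X2 = ten X1 (ten P M) -> Y1 = ten M (ten S Y2) ->
  comp (lay X1 a Y1) (lay X2 b Y2) =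
  comp (lay (ten X1 (ten Q M)) b Y2) (lay X1 a (ten M (ten R Y2))).
Proof. intros Ha Hb -> ->. unfold lay.
  rewrite <- !tenm_idm, !tenm_assoc.
  destruct Ha as [Ha1 Ha2]. destruct Hb as [Hb1 Hb2].
  rewrite <- !tenm_comp by sc.
  rewrite !idid, idl, idr, idl, idr by congruence. reflexivity. Qed.

Lemma swapL_r a b P Q R S X1 Y1 X2 Y2 M r :
  hom C a P Q -> hom C b R S -> X2 = ten X1 (ten P M) -> Y1 = ten M (ten S Y2) ->
  cod r = ten X2 (ten R Y2) ->
  comp (lay X1 a Y1) (comp (lay X2 b Y2) r) =
  comp (lay (ten X1 (ten Q M)) b Y2) (comp (lay X1 a (ten M (ten R Y2))) r).
Proof. intros Ha Hb E1 E2 Er. subst.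
  assert (Hl2 : hom C (lay (ten X1 (ten P M)) b Y2) (ten (ten X1 (ten P M)) (ten R Y2)) (ten (ten X1 (ten P M)) (ten S Y2))) by ty.
  assert (Hl1 : hom C (lay X1 a (ten M (ten S Y2))) (ten X1 (ten P (ten M (ten S Y2)))) (ten X1 (ten Q (ten M (ten S Y2))))) by ty.
  assert (Hr : hom C r (dom r) (ten (ten X1 (ten P M)) (ten R Y2))) by (split; auto).
  rewrite (comp_assoc _ r _ _) by (eapply cd; [exact Hr|exact Hl2|reflexivity] || (eapply cd; [exact Hl2|exact Hl1|oeq])).
  rewrite (swapL a b P Q R S X1 _ _ Y2 M) by (auto || reflexivity).
  rewrite <- comp_assoc. reflexivity.
  eapply cd; [exact Hr|ty|oeq]. eapply cd; [ty|ty|oeq]. Qed.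
End Infra2_L.

Section Infra2_L2.
Variable C : SBMC.
Implicit Types (f g h a b : Mor C) (X Y M P Q R S A B : Ob C).

(* later a : P -> Q is to the right of earlier b : R -> S *)
Lemma swapR a b P Q R S X1 Y1 X2 Y2 M :
  hom C a P Q -> hom C b R S -> X1 = ten X2 (ten S M) -> Y2 = ten M (ten P Y1) ->
  comp (lay X1 a Y1) (lay X2 b Y2) =
  comp (lay X2 b (ten M (ten Q Y1))) (lay (ten X2 (ten R M)) a Y1).
Proof. intros Ha Hb -> ->. symmetry.
  rewrite (swapL C b a R S P Q X2 (ten M (ten Q Y1)) (ten X2 (ten R M)) Y1 M) by (auto||reflexivity).
  reflexivity. Qed.

Lemma swapR_r a b P Q R S X1 Y1 X2 Y2 M r :
  hom C a P Q -> hom C b R S -> X1 = ten X2 (ten S M) -> Y2 = ten M (ten P Y1) ->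
  cod r = ten X2 (ten R Y2) ->
  comp (lay X1 a Y1) (comp (lay X2 b Y2) r) =
  comp (lay X2 b (ten M (ten Q Y1))) (comp (lay (ten X2 (ten R M)) a Y1) r).
Proof. intros Ha Hb E1 E2 Er. subst.
  assert (Hl2 : hom C (lay X2 b (ten M (ten P Y1))) (ten X2 (ten R (ten M (ten P Y1)))) (ten X2 (ten S (ten M (ten P Y1))))) by ty.
  assert (Hr : hom C r (dom r) (ten X2 (ten R (ten M (ten P Y1))))) by (split; auto).
  rewrite (comp_assoc _ r _ _) by (eapply cd; [exact Hr|exact Hl2|reflexivity] || (eapply cd; [exact Hl2|ty|oeq])).
  rewrite (swapR a b P Q R S _ Y1 X2 _ M) by (auto || reflexivity).
  rewrite <- comp_assoc. reflexivity.
  eapply cd; [exact Hr|ty|oeq]. eapply cd; [ty|ty|oeq]. Qed.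
End Infra2_L2.
Lemma wrapL_eq (C : SBMC) (l r : Mor C) : lay unitO l unitO = r -> l = r.
Proof. intros H; rewrite <- H; apply lay_u. Qed.
Lemma wrapR_eq (C : SBMC) (l r : Mor C) : l = lay unitO r unitO -> l = r.
Proof. intros H; rewrite H; symmetry; apply lay_u. Qed.

Ltac tyof e :=
  lazymatch e with
  | comp ?g ?f => let p := tyof f in let q := tyof g in
      lazymatch p with (?A, _) => lazymatch q with (_, ?B) => constr:((A, B)) end end
  | tenm ?f ?g => let p := tyof f in let q := tyof g in
      lazymatch p with (?A1, ?B1) => lazymatch q with (?A2, ?B2) =>
        constr:((ten A1 A2, ten B1 B2)) end end
  | idm ?X => constr:((X, X))
  | braid ?X ?Y => constr:((ten X Y, ten Y X))
  | braidinv ?X ?Y => constr:((ten Y X, ten X Y))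
  | lay ?X ?a ?Y => let p := tyof a in
      lazymatch p with (?P, ?Q) => constr:((ten X (ten P Y), ten X (ten Q Y))) end
  | _ => lazymatch goal with H : hom _ e ?A ?B |- _ => constr:((A, B)) end
  end.

Ltac ow X :=
  lazymatch X with
  | @unitO _ => constr:(0)
  | @ten _ ?a ?b => let n := ow a in let m := ow b in constr:(n + m)
  | _ => constr:(1)
  end.

Ltac owc X := let n := ow X in eval compute in n.

Ltac odrop n X :=
  lazymatch n with
  | 0 => X
  | S ?n' => lazymatch X with
            | @ten ?C _ ?b => odrop n' b
            | _ => lazymatch type of X with Ob ?C => constr:(@unitO C) end
            end
  end.

Ltac otake n X :=
  lazymatch n with
  | 0 => lazymatch type of X with Ob ?C => constr:(@unitO C) end
  | S ?n' => lazymatch X with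
            | @ten ?C ?a ?b => let r := otake n' b in constr:(@ten C a r)
            | _ => X
            end
  end.

Ltac isatom x :=
  lazymatch x with
  | lay _ _ _ => fail
  | comp _ _ => fail
  | idm _ => fail
  | _ => idtac
  end.

Ltac onorm1 := first [rewrite ten_assoc | rewrite ten_unitl | rewrite ten_unitr].

Ltac dcpass :=
  match goal with
  | |- context [cod ?g] => let p := tyof g in
        lazymatch p with (?A, ?B) => rewrite (codh _ g A B) by ty end
  | |- context [dom ?g] => let p := tyof g in
        lazymatch p with (?A, ?B) => rewrite (domh _ g A B) by ty end
  end.

Ltac wrapstep :=
  match goal with
  | |- context [comp ?x ?y] => isatom x; rewrite (comp_wrapl _ x y)
  | |- context [comp ?x ?y] => isatom y; rewrite (comp_wrapr _ y x)
  | |- ?l = _ => isatom l; apply wrapL_eq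
  | |- _ = ?r => isatom r; apply wrapR_eq
  end.

Ltac sortstep :=
  match goal with
  | |- context [comp (lay ?X1 ?a ?Y1) (comp (lay ?X2 ?b ?Y2) ?r)] =>
      let pa := tyof a in let pb := tyof b in
      lazymatch pa with (?P, ?Q) => lazymatch pb with (?R, ?S) =>
      let x1 := owc X1 in let p := owc P in let x2 := owc X2 in let s := owc S in
      let c := eval compute in (andb (Nat.leb (x1 + p) x2) (Nat.ltb x1 (x2 + s))) in
      lazymatch c with true =>
        let k := eval compute in (x1 + p) in
        let M := odrop k X2 in
        rewrite (swapL_r _ a b P Q R S X1 Y1 X2 Y2 M r) by tc
      end end end
  | |- context [comp (lay ?X1 ?a ?Y1) (lay ?X2 ?b ?Y2)] =>
      let pa := tyof a in let pb := tyof b in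
      lazymatch pa with (?P, ?Q) => lazymatch pb with (?R, ?S) =>
      let x1 := owc X1 in let p := owc P in let x2 := owc X2 in let s := owc S in
      let c := eval compute in (andb (Nat.leb (x1 + p) x2) (Nat.ltb x1 (x2 + s))) in
      lazymatch c with true =>
        let k := eval compute in (x1 + p) in
        let M := odrop k X2 in
        rewrite (swapL _ a b P Q R S X1 Y1 X2 Y2 M) by tc
      end end end
  end.

Ltac nf1 :=
  first [ rewrite cassoc by tc
        | rewrite lay_lay
        | rewrite lay_idm
        | rewrite lay_comp by tc
        | rewrite lay_tenm
        | dcpass
        | rewrite idl by tc
        | rewrite idr by tc
        | onorm1
        | wrapstep
        | sortstep ].

Ltac nf := repeat nf1.
Ltac nfeq := nf; reflexivity.

Ltac wnth k W :=
  lazymatch k with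
  | 0 => W
  | S ?k' => lazymatch W with comp _ ?r => wnth k' r end
  end.
Ltac wrest n W :=
  lazymatch n with
  | 0 => W
  | S ?n' => lazymatch W with comp _ ?r => wrest n' r | _ => constr:(tt) end
  end.

Ltac onorm := repeat onorm1.

Ltac swap_pair T :=
  lazymatch T with
  | comp (lay ?X1 ?a ?Y1) ?T' =>
    let pa := tyof a in lazymatch pa with (?P, ?Q) =>
    let x1 := owc X1 in let p := owc P in
    lazymatch T' with
    | comp (lay ?X2 ?b ?Y2) ?r =>
      let pb := tyof b in lazymatch pb with (?R, ?S) =>
      let x2 := owc X2 in let s := owc S in
      let cL := eval compute in (Nat.leb (x1 + p) x2) in
      let cR := eval compute in (Nat.leb (x2 + s) x1) in
      lazymatch cL with
      | true => let k := eval compute in (x1 + p) in let M := odrop k X2 in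
                rewrite (swapL_r _ a b P Q R S X1 Y1 X2 Y2 M r) by tc
      | false => lazymatch cR with
        | true => let k := eval compute in (x2 + s) in let M := odrop k X1 in
                rewrite (swapR_r _ a b P Q R S X1 Y1 X2 Y2 M r) by tc
        end end end
    | lay ?X2 ?b ?Y2 =>
      let pb := tyof b in lazymatch pb with (?R, ?S) =>
      let x2 := owc X2 in let s := owc S in
      let cL := eval compute in (Nat.leb (x1 + p) x2) in
      let cR := eval compute in (Nat.leb (x2 + s) x1) in
      lazymatch cL with
      | true => let k := eval compute in (x1 + p) in let M := odrop k X2 in
                rewrite (swapL _ a b P Q R S X1 Y1 X2 Y2 M) by tc
      | false => lazymatch cR with
        | true => let k := eval compute in (x2 + s) in let M := odrop k X1 in
                rewrite (swapR _ a b P Q R S X1 Y1 X2 Y2 M) by tc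
        end end end
    end end
  end.

Ltac swap_at i :=
  lazymatch goal with |- ?L = _ => let T := wnth i L in swap_pair T end; onorm.

(* move layer j to position k < j (making it applied later) *)
Ltac pull j k :=
  let c := eval compute in (Nat.ltb k j) in
  lazymatch c with
  | true => let j' := eval compute in (pred j) in swap_at j'; pull j' k
  | false => idtac
  end.
(* move layer k to position j > k (making it applied earlier) *)
Ltac push k j :=
  let c := eval compute in (Nat.ltb k j) in
  lazymatch c with
  | true => swap_at k; let k' := eval compute in (S k) in push k' j
  | false => idtac
  end.

Ltac use H wl wr k n :=
  lazymatch type of H with ?P = ?Q =>
  lazymatch goal with |- ?L = _ =>
    let T := wnth k L in
    let l := lazymatch T with comp ?l _ => l | _ => T end in
    lazymatch l with lay ?Xk _ ?Yk =>
      let X := otake wl Xk in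
      let yw := owc Yk in let m := eval compute in (yw - wr) in
      let Y := odrop m Yk in
      let rest := wrest n T in
      let E := fresh "E" in
      lazymatch rest with
      | tt => assert (E : T = lay X Q Y)
                by (transitivity (lay X P Y); [nfeq | apply (f_equal (fun z => lay X z Y)); exact H])
      | _ => assert (E : T = comp (lay X Q Y) rest)
                by (transitivity (comp (lay X P Y) rest); [nfeq | apply (f_equal (fun z => comp (lay X z Y) rest)); exact H])
      end; rewrite E; clear E
    end end end.

Ltac useR H wl wr k n := symmetry; use H wl wr k n; symmetry.
Ltac sg := match goal with |- ?g => idtac g end.

(* H : P = idm Z ; inserts lay X P Y right after (outer of) the suffix at index k *)
Ltac ins H X Y k :=
  lazymatch type of H with ?P = idm ?Z =>
  lazymatch goal with |- ?L = _ =>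
    let T := wnth k L in
    let E := fresh "E" in
    assert (E : T = comp (lay X P Y) T)
      by (transitivity (comp (lay X (idm Z) Y) T);
          [nfeq | apply (f_equal (fun z => comp (lay X z Y) T)); symmetry; exact H]);
    rewrite E; clear E
  end end.

Section Br_Br.
Variable C : SBMC.
Implicit Types (f g h a b : Mor C) (X Y M P Q R S A B : Ob C).

Lemma braid_unitr X : braid X unitO = idm X.
Proof.
  assert (H := braid_hex1 C X unitO unitO).
  rewrite ten_unitl, tenm_unitl, tenm_unitr in H.
  assert (H2 := braidinv_braid C X unitO).
  assert (E : comp (braidinv X unitO) (braid X unitO) = comp (braidinv X unitO) (comp (braid X unitO) (braid X unitO))) by (rewrite <- H; reflexivity).
  rewrite comp_assoc in E by (rewrite ?cod_braid, ?dom_braid, ?dom_braidinv, ?ten_unitl, ?ten_unitr; reflexivity).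
  rewrite H2 in E. rewrite idl in E by (rewrite cod_braid, ten_unitl, ten_unitr; reflexivity).
  rewrite ten_unitr in E. exact (eq_sym E).
Qed.

Lemma braid_unitl X : braid unitO X = idm X.
Proof.
  assert (H := braid_hex2 C unitO unitO X).
  rewrite ten_unitl, tenm_unitl, tenm_unitr in H.
  assert (H2 := braidinv_braid C unitO X).
  assert (E : comp (braidinv unitO X) (braid unitO X) = comp (braidinv unitO X) (comp (braid unitO X) (braid unitO X))) by (rewrite <- H; reflexivity).
  rewrite comp_assoc in E by (rewrite ?cod_braid, ?dom_braid, ?dom_braidinv, ?ten_unitl, ?ten_unitr; reflexivity).
  rewrite H2 in E. rewrite idl in E by (rewrite cod_braid, ten_unitl, ten_unitr; reflexivity).
  rewrite ten_unitl in E. exact (eq_sym E).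
Qed.

Lemma nat_cu1 e P X : hom C e P unitO -> comp (tenm (idm X) e) (braid P X) = tenm e (idm X).
Proof. intros [H1 H2]. assert (H := braid_natural C e (idm X)).
  rewrite H2, cod_idm, dom_idm, H1, braid_unitl, idl in H. rewrite H; reflexivity.
  rewrite cod_tenm, H2, cod_idm, ten_unitl; reflexivity. Qed.
Lemma nat_cu2 e P X : hom C e P unitO -> comp (tenm e (idm X)) (braid X P) = tenm (idm X) e.
Proof. intros [H1 H2]. assert (H := braid_natural C (idm X) e).
  rewrite H2, cod_idm, dom_idm, H1, braid_unitr, idl in H. rewrite H; reflexivity.
  rewrite cod_tenm, H2, cod_idm, ten_unitr; reflexivity. Qed.
Lemma nat_un1 u P X : hom C u unitO P -> comp (braid X P) (tenm (idm X) u) = tenm u (idm X).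
Proof. intros [H1 H2]. assert (H := braid_natural C (idm X) u).
  rewrite H2, cod_idm, dom_idm, H1, braid_unitr, idr in H. exact H.
  rewrite dom_tenm, H1, dom_idm, ten_unitl; reflexivity. Qed.
Lemma nat_un2 u P X : hom C u unitO P -> comp (braid P X) (tenm u (idm X)) = tenm (idm X) u.
Proof. intros [H1 H2]. assert (H := braid_natural C u (idm X)).
  rewrite H2, cod_idm, dom_idm, H1, braid_unitl, idr in H. exact H.
  rewrite dom_tenm, H1, dom_idm, ten_unitr; reflexivity. Qed.
End Br_Br.

Section Br_Br2.
Variable C : SBMC.
Implicit Types (f g h a b m d e : Mor C) (X Y M P Q R S A B : Ob C).

Lemma hex1' X P Q : braid X (ten P Q) = comp (tenm (idm P) (braid X Q)) (tenm (braid X P) (idm Q)).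
Proof. apply braid_hex1. Qed.
Lemma hex2' P Q X : braid (ten P Q) X = comp (tenm (braid P X) (idm Q)) (tenm (idm P) (braid Q X)).
Proof. apply braid_hex2. Qed.

Lemma natXm m X P Q R : hom C m (ten P Q) R ->
  comp (braid X R) (tenm (idm X) m) =
  comp (tenm m (idm X)) (comp (tenm (idm P) (braid X Q)) (tenm (braid X P) (idm Q))).
Proof. intros [H1 H2]. assert (H := braid_natural C (idm X) m).
  rewrite cod_idm, H2, dom_idm, H1 in H. rewrite H, hex1'. reflexivity. Qed.
Lemma natXd d X P Q R : hom C d R (ten P Q) ->
  comp (tenm d (idm X)) (braid X R) =
  comp (comp (tenm (idm P) (braid X Q)) (tenm (braid X P) (idm Q))) (tenm (idm X) d).
Proof. intros [H1 H2]. assert (H := braid_natural C (idm X) d).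
  rewrite cod_idm, H2, dom_idm, H1 in H. rewrite <- H, hex1'. reflexivity. Qed.
Lemma natXe e X P Q : hom C e (ten P Q) unitO ->
  comp (tenm e (idm X)) (comp (tenm (idm P) (braid X Q)) (tenm (braid X P) (idm Q))) = tenm (idm X) e.
Proof. intros He. rewrite <- hex1'. apply nat_cu2. exact He. Qed.
Lemma natXu u X P Q : hom C u unitO (ten P Q) ->
  comp (comp (tenm (idm P) (braid X Q)) (tenm (braid X P) (idm Q))) (tenm (idm X) u) = tenm u (idm X).
Proof. intros Hu. rewrite <- hex1'. apply nat_un1. exact Hu. Qed.
Lemma natXf f X P R : hom C f P R ->
  comp (braid X R) (tenm (idm X) f) = comp (tenm f (idm X)) (braid X P).
Proof. intros [H1 H2]. assert (H := braid_natural C (idm X) f).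
  rewrite cod_idm, H2, dom_idm, H1 in H. exact H. Qed.
Lemma natfX f X P R : hom C f P R ->
  comp (braid R X) (tenm f (idm X)) = comp (tenm (idm X) f) (braid P X).
Proof. intros [H1 H2]. assert (H := braid_natural C f (idm X)).
  rewrite cod_idm, H2, dom_idm, H1 in H. exact H. Qed.
End Br_Br2.
Section Br_Br3.
Variable C : SBMC.
Implicit Types (f g h a b m d e : Mor C) (X Y M P Q R S A B : Ob C).
Lemma natfXd d X P P1 P2 : hom C d P (ten P1 P2) ->
  comp (tenm (idm X) d) (braid P X) =
  comp (comp (tenm (braid P1 X) (idm P2)) (tenm (idm P1) (braid P2 X))) (tenm d (idm X)).
Proof. intros Hd. rewrite <- hex2'. symmetry. apply natfX. exact Hd. Qed.
Lemma natfXm m X P1 P2 R : hom C m (ten P1 P2) R ->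
  comp (braid R X) (tenm m (idm X)) =
  comp (tenm (idm X) m) (comp (tenm (braid P1 X) (idm P2)) (tenm (idm P1) (braid P2 X))).
Proof. intros Hm. rewrite <- hex2'. apply natfX. exact Hm. Qed.
End Br_Br3.

Section WB_WB.
Variable C : SBMC.
Variables (A : Ob C) (eta mu eps delta : Mor C).
Hypothesis Heta : hom C eta unitO A.
Hypothesis Hmu : hom C mu (ten A A) A.
Hypothesis Heps : hom C eps A unitO.
Hypothesis Hdelta : hom C delta A (ten A A).
Hypothesis Hass : comp mu (tenm mu (idm A)) = comp mu (tenm (idm A) mu).
Hypothesis Hul : comp mu (tenm eta (idm A)) = idm A.
Hypothesis Hur : comp mu (tenm (idm A) eta) = idm A.
Hypothesis Hcoass : comp (tenm delta (idm A)) delta = comp (tenm (idm A) delta) delta.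
Hypothesis Hcul : comp (tenm eps (idm A)) delta = idm A.
Hypothesis Hcur : comp (tenm (idm A) eps) delta = idm A.
Hypothesis Hdm : comp delta mu
    = comp (tenm mu mu) (comp (tenm (idm A) (tenm (braid A A) (idm A))) (tenm delta delta)).
Hypothesis He1 : comp eps (comp mu (tenm mu (idm A)))
    = comp (tenm (comp eps mu) (comp eps mu)) (tenm (idm A) (tenm delta (idm A))).
Hypothesis He2 : comp eps (comp mu (tenm mu (idm A)))
    = comp (tenm (comp eps mu) (comp eps mu))
        (tenm (idm A) (tenm (comp (braidinv A A) delta) (idm A))).
Hypothesis Hu1 : comp (tenm delta (idm A)) (comp delta eta)
    = comp (tenm (idm A) (tenm mu (idm A))) (tenm (comp delta eta) (comp delta eta)).
Hypothesis Hu2 : comp (tenm delta (idm A)) (comp delta eta)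
    = comp (tenm (idm A) (tenm (comp mu (braidinv A A)) (idm A)))
        (tenm (comp delta eta) (comp delta eta)).

Definition PiL_ := PiL C A eta mu eps delta.
Definition PiR_ := PiR C A eta mu eps delta.

Lemma eps_PiL : comp eps PiL_ = eps.
Proof. unfold PiL_, PiL. nf. push 0 2.
  use (nat_cu1 C eps A A Heps) 1 0 2 2. nf.
  use Hcur 0 1 2 2. nf. use Hul 0 0 1 2. nfeq.
Qed.

Lemma lemA : comp (tenm PiL_ (comp eps mu)) (tenm delta (idm A)) = comp PiL_ mu.
Proof. symmetry. unfold PiL_, PiL. nf.
  use (natXm C mu A A A A Hmu) 1 0 2 2. nf.
  use (eq_sym Hass) 0 1 1 2. nf. pull 3 2. use He1 0 1 0 3. nf.
  use (natXd C delta A A A A Hdelta) 1 1 5 2. nf.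
  assert (Hem : hom C (comp eps mu) (ten A A) unitO) by ty.
  use (natXe C (comp eps mu) A A A Hem) 0 0 0 4. nfeq.
Qed.

Lemma UU2 : comp (tenm (idm A) delta) (comp delta eta) = comp (tenm (idm A) (tenm (comp mu (braidinv A A)) (idm A)))
        (tenm (comp delta eta) (comp delta eta)).
Proof. rewrite <- Hu2. rewrite comp_assoc by tc. rewrite <- Hcoass. rewrite <- comp_assoc by tc. reflexivity. Qed.
Lemma UU1 : comp (tenm (idm A) delta) (comp delta eta) = comp (tenm (idm A) (tenm mu (idm A)))
        (tenm (comp delta eta) (comp delta eta)).
Proof. rewrite <- Hu1. rewrite comp_assoc by tc. rewrite <- Hcoass. rewrite <- comp_assoc by tc. reflexivity. Qed.

Lemma lemB : comp (tenm PiR_ (idm A)) delta =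
  comp (tenm (idm A) mu) (comp (tenm (braid A A) (idm A)) (tenm (idm A) (comp delta eta))).
Proof. symmetry. unfold PiR_, PiR. nf.
  ins Hcul A (@unitO C) 0. nf.
  use Hdm 1 0 1 2. nf. push 4 6. use UU2 1 0 6 3. nf.
  assert (Hm : hom C (comp mu (braidinv A A)) (ten A A) A) by ty.
  use (natXm C _ A A A A Hm) 2 1 3 3. nf.
  use (natfXd C delta A A A A Hdelta) 0 1 9 2. nf.
  assert (Hu : hom C (comp delta eta) unitO (ten A A)) by ty.
  swap_at 8. use (natXu C _ A A A Hu) 1 0 9 4. nf.
  push 7 10. push 6 9. push 5 8.
  use (eq_sym (natXu C _ A A A Hu)) 1 2 6 2. nf.
  use (braidinv_braid C A A) 2 2 4 2. nf.
  use (eq_sym Hass) 1 2 2 2. nf.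
  use (eq_sym (natfXm C mu A A A A Hmu)) 0 3 3 3. nf.
  push 0 5. swap_at 9. use (eq_sym Hdm) 0 0 5 5. nf.
  use Hur 0 0 6 2. nfeq.
Qed.
End WB_WB.

Section Hopf_H.
Variable C : SBMC.
Variables (A : Ob C) (eta mu eps delta lam : Mor C).
Hypothesis Heta : hom C eta unitO A.
Hypothesis Hmu : hom C mu (ten A A) A.
Hypothesis Heps : hom C eps A unitO.
Hypothesis Hdelta : hom C delta A (ten A A).
Hypothesis Hlam : hom C lam A A.
Hypothesis Hass : comp mu (tenm mu (idm A)) = comp mu (tenm (idm A) mu).
Hypothesis Hul : comp mu (tenm eta (idm A)) = idm A.
Hypothesis Hur : comp mu (tenm (idm A) eta) = idm A.
Hypothesis Hcoass : comp (tenm delta (idm A)) delta = comp (tenm (idm A) delta) delta.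
Hypothesis Hcul : comp (tenm eps (idm A)) delta = idm A.
Hypothesis Hcur : comp (tenm (idm A) eps) delta = idm A.
Hypothesis Hdm : comp delta mu
    = comp (tenm mu mu) (comp (tenm (idm A) (tenm (braid A A) (idm A))) (tenm delta delta)).
Hypothesis He1 : comp eps (comp mu (tenm mu (idm A)))
    = comp (tenm (comp eps mu) (comp eps mu)) (tenm (idm A) (tenm delta (idm A))).
Hypothesis He2 : comp eps (comp mu (tenm mu (idm A)))
    = comp (tenm (comp eps mu) (comp eps mu))
        (tenm (idm A) (tenm (comp (braidinv A A) delta) (idm A))).
Hypothesis Hu1 : comp (tenm delta (idm A)) (comp delta eta)
    = comp (tenm (idm A) (tenm mu (idm A))) (tenm (comp delta eta) (comp delta eta)).
Hypothesis Hu2 : comp (tenm delta (idm A)) (comp delta eta)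
    = comp (tenm (idm A) (tenm (comp mu (braidinv A A)) (idm A)))
        (tenm (comp delta eta) (comp delta eta)).
Hypothesis Hwl : wedge C mu delta (idm A) lam = PiL C A eta mu eps delta.
Hypothesis Hwr : wedge C mu delta lam (idm A) = PiR C A eta mu eps delta.
Hypothesis Hwlam : wedge C mu delta (wedge C mu delta lam (idm A)) lam = lam.

Lemma lamPi : lam = comp mu (comp (tenm lam (wedge C mu delta (idm A) lam)) delta).
Proof. transitivity (wedge C mu delta (wedge C mu delta lam (idm A)) lam). symmetry; exact Hwlam.
  unfold wedge. nf. use Hcoass 0 0 4 2. nf. push 1 2. use Hass 0 0 0 2. nfeq.
Qed.

Lemma DL : comp (tenm mu mu) (comp (tenm (idm A) (tenm (braid A A) (idm A))) (tenm (comp delta eta) delta)) = delta.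
Proof. nf. use (eq_sym Hdm) 0 0 0 5. nf. use Hul 0 0 1 2. nfeq. Qed.

Lemma KEY : comp (tenm lam (comp eps mu)) (tenm delta (idm A)) =
  comp mu (comp (tenm (idm A) (comp lam mu)) (comp (tenm (braid A A) (idm A)) (tenm (idm A) delta))).
Proof. assert (HPL : hom C (PiL_ C A eta mu eps delta) A A) by (unfold PiL_, PiL; ty).
  assert (L1 : lam = comp mu (comp (tenm lam (PiL_ C A eta mu eps delta)) delta))
    by (unfold PiL_; rewrite <- Hwl; apply lamPi).
  pose proof (lemA C A eta mu eps delta Heta Hmu Heps Hdelta Hass He1) as LA.
  assert (L2 : PiL_ C A eta mu eps delta = comp mu (comp (tenm (idm A) lam) delta)) by (unfold PiL_; rewrite <- Hwl; reflexivity).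
  nf. use L1 0 2 2 1. nf. use Hcoass 0 1 5 2. nf. pull 2 0. use LA 1 0 1 4. nf.
  use L2 1 0 1 1. nf. use Hdm 1 0 3 2. nf.
  use (eq_sym Hass) 0 0 0 2. nf. use (eq_sym Hass) 0 2 3 2. nf.
  swap_at 7. use (eq_sym Hcoass) 0 1 8 2. nf.
  assert (HPR : hom C (PiR_ C A eta mu eps delta) A A) by (unfold PiR_, PiR; ty).
  assert (L3 : comp mu (comp (tenm lam (idm A)) delta) = PiR_ C A eta mu eps delta) by (unfold PiR_; rewrite <- Hwr; reflexivity).
  use L3 0 2 6 3. nf.
  pose proof (lemB C A eta mu eps delta Heta Hmu Heps Hdelta Hass Hur Hcoass Hcul Hdm Hu2) as LB.
  use LB 0 1 6 2. nf. pull 6 5. use (natfXm C mu A A A A Hmu) 1 1 4 2. nf.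
  pull 8 6. use (eq_sym (natXm C mu A A A A Hmu)) 0 2 4 3. nf.
  use Hass 1 0 2 2. nf. pull 4 3. use DL 1 0 4 6. nfeq.
Qed.
End Hopf_H.

Section Main_M.
Variable C : SBMC.
Variables (D B : Ob C) (etaD muD epsD deltaD etaB muB epsB deltaB lamB f g : Mor C).
Hypothesis HetaD : hom C etaD unitO D.
Hypothesis HmuD : hom C muD (ten D D) D.
Hypothesis HepsD : hom C epsD D unitO.
Hypothesis HdeltaD : hom C deltaD D (ten D D).
Hypothesis HassD : comp muD (tenm muD (idm D)) = comp muD (tenm (idm D) muD).
Hypothesis HcoassD : comp (tenm deltaD (idm D)) deltaD = comp (tenm (idm D) deltaD) deltaD.
Hypothesis HculD : comp (tenm epsD (idm D)) deltaD = idm D.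
Hypothesis HcurD : comp (tenm (idm D) epsD) deltaD = idm D.
Hypothesis HdmD : comp deltaD muD
    = comp (tenm muD muD) (comp (tenm (idm D) (tenm (braid D D) (idm D))) (tenm deltaD deltaD)).
Hypothesis HetaB : hom C etaB unitO B.
Hypothesis HmuB : hom C muB (ten B B) B.
Hypothesis HepsB : hom C epsB B unitO.
Hypothesis HdeltaB : hom C deltaB B (ten B B).
Hypothesis HlamB : hom C lamB B B.
Hypothesis Hf : hom C f B D.
Hypothesis Hg : hom C g D B.
Hypothesis Hfmu : comp f muB = comp muD (tenm f f).
Hypothesis Hfdelta : comp deltaD f = comp (tenm f f) deltaB.
Hypothesis Hgeps : comp epsB g = epsD.
Hypothesis Hgdelta : comp deltaB g = comp (tenm g g) deltaD.
Hypothesis Hgf : comp g f = idm B.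
Hypothesis Hproj : comp g (comp muD (tenm (idm D) f)) = comp muB (tenm g (idm B)).
Hypothesis HKEY : comp (tenm lamB (comp epsB muB)) (tenm deltaB (idm B)) =
  comp muB (comp (tenm (idm B) (comp lamB muB)) (comp (tenm (braid B B) (idm B)) (tenm (idm B) deltaB))).
Hypothesis HePi : comp epsB (comp muB (comp (tenm (idm B) lamB) deltaB)) = epsB.

Lemma T1 : comp (comp (comp muD (tenm (idm D) f)) (comp (tenm (idm D) (comp lamB g)) deltaD)) (comp muD (tenm (idm D) f))
  = comp (comp (comp muD (tenm (idm D) f)) (comp (tenm (idm D) (comp lamB g)) deltaD))
      (comp (tenm (idm D) (comp epsD (comp muD (tenm (idm D) f)))) (tenm deltaD (idm B))).
Proof. nf. use HdmD 0 0 4 2. nf. use Hfdelta 2 0 7 2. nf. use (natXf C f D B D Hf) 1 1 7 2. nf. use Hproj 1 0 3 3. nf. pull 5 1. use HassD 0 0 0 2. nf. pull 6 3. use (eq_sym Hfmu) 1 0 1 3. nf.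
  use (eq_sym (natfX C g B D B Hg)) 1 1 5 2. nf. use (eq_sym HKEY) 1 0 2 5. nf.
  useR (eq_sym Hgeps) 1 0 0 1. nf. useR Hproj 1 0 1 3. nf. useR HcoassD 0 1 7 2. nf.
  symmetry. push 2 5. symmetry. useR (eq_sym Hgdelta) 1 1 5 3. nfeq.
Qed.

Lemma T2 : comp (comp (tenm (idm D) (comp epsD (comp muD (tenm (idm D) f)))) (tenm deltaD (idm B)))
   (comp (tenm (idm D) (comp lamB g)) deltaD) = idm D.
Proof. nf. use (eq_sym Hgeps) 1 0 0 1. nf. use Hproj 1 0 1 3. nf. use HcoassD 0 0 5 2. nf. use (eq_sym Hgdelta) 1 0 3 3. nf. use HePi 1 0 0 4. nf. use Hgeps 1 0 0 2. nf. use HcurD 0 0 0 2. nfeq.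
Qed.

Lemma final :
  let phiD := comp muD (tenm (idm D) f) in
  let tBD := comp phiD (comp (tenm (idm D) (comp lamB g)) deltaD) in
  let betaD := comp (tenm (idm D) (comp epsD phiD)) (tenm deltaD (idm B)) in
  comp tBD tBD = tBD /\
  forall (DB : Ob C) (p i : Mor C),
    hom C p D DB -> hom C i DB D ->
    tBD = comp i p -> comp p i = idm DB ->
    is_coequalizer C phiD betaD p.
Proof.
  assert (T1' := T1). assert (T2' := T2).
  set (P := comp muD (tenm (idm D) f)) in *.
  set (W := comp (tenm (idm D) (comp lamB g)) deltaD) in *.
  set (Be := comp (tenm (idm D) (comp epsD P)) (tenm deltaD (idm B))) in *.
  assert (HP : hom C P (ten D B) D) by (unfold P; ty).
  assert (HW : hom C W D (ten D B)) by (unfold W; ty).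
  assert (HBe : hom C Be (ten D B) D) by (unfold Be, P; ty).
  cbv zeta.
  assert (Hbw : comp (comp P W) P = comp (comp P W) Be) by exact T1'.
  assert (Key2 : forall h, hom C h D (cod h) -> comp h P = comp h Be -> comp h (comp P W) = h).
  { intros h Hh E. rewrite comp_assoc by tc. rewrite E. rewrite <- comp_assoc by tc.
    rewrite T2'. apply idr. tc. }
  split.
  - apply Key2. split; [tc | reflexivity]. exact Hbw.
  - intros DB p i Hp Hi Ht Hpi.
    assert (Hpp : comp p (comp P W) = p).
    { rewrite Ht. rewrite comp_assoc by tc. rewrite Hpi. apply idl. tc. }
    split.
    + transitivity (comp (comp p (comp P W)) P). rewrite Hpp; reflexivity.
      transitivity (comp (comp p (comp P W)) Be). 2: rewrite Hpp; reflexivity.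
      rewrite <- (comp_assoc _ P (comp P W) p) by tc. rewrite Hbw.
      rewrite (comp_assoc _ Be (comp P W) p) by tc. reflexivity.
    + intros h Hdh Hh.
      assert (Hh' : hom C h D (cod h)).
      { split; [rewrite Hdh; tc | reflexivity]. }
      exists (comp h i). split; [|split; [|split]].
      * rewrite dom_comp by tc. destruct Hi as [Hi1 Hi2]. destruct Hp as [Hp1 Hp2]. congruence.
      * rewrite cod_comp by tc. reflexivity.
      * rewrite <- comp_assoc by tc. rewrite <- Ht. apply Key2; assumption.
      * intros u' Hu1 Hu2 Hu3.
        assert (Hu' : hom C u' DB (cod h)) by (split; [rewrite Hu1; destruct Hp; congruence | exact Hu2]).
        rewrite <- Hu3. rewrite <- comp_assoc by tc. rewrite Hpi.
        symmetry. apply idr. destruct Hp as [Hp1 Hp2]. congruence.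
Qed.
End Main_M.

Theorem proposition3p4 (C : SBMC) (D B : Ob C)
    (etaD muD epsD deltaD : Mor C) (etaB muB epsB deltaB lamB : Mor C)
    (f g : Mor C) :
  is_weak_projection C D B etaD muD epsD deltaD etaB muB epsB deltaB lamB f g ->
  let phiD := comp muD (tenm (idm D) f) in
  let tBD := comp phiD (comp (tenm (idm D) (comp lamB g)) deltaD) in
  let betaD := comp (tenm (idm D) (comp epsD phiD)) (tenm deltaD (idm B)) in
  comp tBD tBD = tBD /\
  forall (DB : Ob C) (p i : Mor C),
    hom C p D DB -> hom C i DB D ->
    tBD = comp i p -> comp p i = idm DB ->
    is_coequalizer C phiD betaD p.
Proof.
  intros HP.
  destruct HP as [HWD [HWH [HfA [HfC [HgC [Hgf Hproj]]]]]].
  destruct HWD as [[HetaD [HmuD [HassD [HulD HurD]]]] [[HepsD [HdeltaD [HcoassD [HculD HcurD]]]] [HdmD [He1D [He2D [Hu1D Hu2D]]]]]].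
  destruct HWH as [[[HetaB [HmuB [HassB [HulB HurB]]]] [[HepsB [HdeltaB [HcoassB [HculB HcurB]]]] [HdmB [He1B [He2B [Hu1B Hu2B]]]]]] [HlamB [Hwl [Hwr Hwlam]]]].
  destruct HfA as [Hf [Hfeta Hfmu]]. destruct HfC as [_ [Hfeps Hfdelta]].
  destruct HgC as [Hg [Hgeps Hgdelta]].
  pose proof (KEY C B etaB muB epsB deltaB lamB HetaB HmuB HepsB HdeltaB HlamB HassB HulB HurB
     HcoassB HculB HdmB He1B Hu2B Hwl Hwr Hwlam) as HKEY.
  pose proof (eps_PiL C B etaB muB epsB deltaB HetaB HmuB HepsB HdeltaB HulB HcurB) as HePi.
  unfold PiL_ in HePi. rewrite <- Hwl in HePi. unfold wedge in HePi.
  exact (final C D B muD epsD deltaD muB epsB deltaB lamB f g HmuD HepsD HdeltaD HassD HcoassD HcurD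
    HdmD HmuB HepsB HdeltaB HlamB Hf Hg Hfmu Hfdelta Hgeps Hgdelta Hproj HKEY HePi).
Qed.
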